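(* Let $K=1$ (a control arm $0$ and one arm $1$), $J\ge1$, and suppose $\nu_{a,i}=\mathcal N(\mu_{a,i},\sigma_{a,i}^2)$ with known $\sigma_{a,i}>0$, and $\boldsymbol\mu\in\mathcal L$. Let $\Delta_1=\mu_0-\mu_1$. Then: (1) $T^\star_{\mathrm{agnostic}}(\boldsymbol\mu)=\dfrac{2\left(\sqrt{\sum_{i=1}^J\beta_i^2\sigma_{0,i}^2/\alpha_i}+\sqrt{\sum_{i=1}^J\beta_i^2\sigma_{1,i}^2/\alpha_i}\right)^2}{\Delta_1^2}$, attained at $w^\star_{a,i}=\dfrac{\alpha_i\sqrt{\sum_{j}\beta_j^2\sigma_{a,j}^2/\alpha_j}}{\sqrt{\sum_j\beta_j^2\sigma_{0,j}^2/\alpha_j}+\sqrt{\sum_j\beta_j^2\sigma_{1,j}^2/\alpha_j}}$; (2) $T^\star_{\mathrm{prop}}(\boldsymbol\mu)=\dfrac{2\sum_{i=1}^J\frac{\beta_i^2}{\alpha_i}(\sigma_{0,i}+\sigma_{1,i})^2}{\Delta_1^2}$, attained at $w^\star_{a,i}=\dfrac{\alpha_i\sigma_{a,i}}{\sigma_{0,i}+\sigma_{1,i}}$ for all $i\le J$, $a\in\{0,1\}$; (3) $T^\star_{\mathrm{active}}(\boldsymbol\mu)=\dfrac{2\left(\sum_{i=1}^J|\beta_i|(\sigma_{0,i}+\sigma_{1,i})\right)^2}{\Delta_1^2}$, attained at $w^\star_{a,i}=\dfrac{|\beta_i|\sigma_{a,i}}{\sum_{j=1}^J|\beta_j|(\sigma_{0,j}+\sigma_{1,j})}$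 for all $i\le J$, $a\in\{0,1\}$.
   Context: Arms $a\in\{0,1\}$ (arm $0$ is the control), subpopulations $i\in[J]$; means $\boldsymbol\mu=(\mu_{a,i})$. Known $\boldsymbol\beta\in\mathbb R^J$ and known $\boldsymbol\alpha\in\Sigma_J$ with $\alpha_i>0$ ($\Sigma_n$ the probability simplex). Weighted means $\mu_a=\sum_i\beta_i\mu_{a,i}$, $\lambda_a=\sum_i\beta_i\lambda_{a,i}$. For the Gaussian model, $d_{a,i}(x,y)=(x-y)^2/(2\sigma_{a,i}^2)$ is the KL divergence between $\mathcal N(x,\sigma_{a,i}^2)$ and $\mathcal N(y,\sigma_{a,i}^2)$. $\mathcal L$ is the set of $\boldsymbol\mu\in\mathbb R^{2\times J}$ with $\mu_1\ne\mu_0$; $\mathcal S_{\boldsymbol\beta}(\boldsymbol\mu)=\{a\in\{1\}:\mu_a>\mu_0\}$ and $\mathrm{Alt}_{\boldsymbol\beta}(\boldsymbol\mu)=\{\boldsymbol\lambda\in\mathcal L:\mathcal S_{\boldsymbol\beta}(\boldsymbol\lambda)\ne\mathcal S_{\boldsymbol\beta}(\boldsymbol\mu)\}$. For a constraint set $\mathcal C$, $T^\star(\boldsymbol\mu)^{-1}=\sup_{\mathbf w\in\mathcal C}\inf_{\boldsymbol\lambda\in\mathrm{Alt}_{\boldsymbol\beta}(\boldsymbol\mu)}\sum_{a=0}^1\sum_{i=1}^J w_{a,i}\,d_{a,i}(\mu_{a,i},\lambda_{a,i})$, and $T^\star_{\mathrm{active}},T^\star_{\mathrm{prop}},T^\star_{\mathrm{agnostic}}$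 use respectively $\mathcal C_{\mathrm{active}}=\Sigma_{2J}$, $\mathcal C_{\mathrm{prop}}=\{\mathbf w\in\Sigma_{2J}:w_{0,i}+w_{1,i}=\alpha_i\ \forall i\}$, $\mathcal C_{\mathrm{agnostic}}=\{\mathbf w:w_{a,i}=\alpha_iu_a,\ \mathbf u\in\Sigma_2\}$. ''Attained at $\mathbf w^\star$'' means $\mathbf w^\star$ belongs to the constraint set and achieves the supremum. *)

(* Defs.v *)
From HB Require Import structures.
From mathcomp Require Import all_boot all_order all_algebra.
From mathcomp Require Import all_classical all_reals.
Set Implicit Arguments. Unset Strict Implicit. Unset Printing Implicit Defensive.
Import Order.TTheory GRing.Theory Num.Theory.
Local Open Scope ring_scope.
Local Open Scope classical_set_scope.

(* Arms are indexed by 'I_2 (arm 0 = control, arm 1), subpopulations by 'I_J.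
   A mean matrix / allocation is a function 'I_2 -> 'I_J -> R. *)

Section Defs.
Variables (R : realType) (J : nat).

Definition wmean (beta : 'I_J -> R) (mu : 'I_2 -> 'I_J -> R) (a : 'I_2) : R :=
  \sum_(i < J) beta i * mu a i.

(* Gaussian KL divergence d_{a,i}(x,y) = (x-y)^2 / (2 sigma_{a,i}^2) *)
Definition dKL (sigma : 'I_2 -> 'I_J -> R) (a : 'I_2) (i : 'I_J) (x y : R) : R :=
  (x - y) ^+ 2 / (2 * sigma a i ^+ 2).

Definition Lset (beta : 'I_J -> R) : set ('I_2 -> 'I_J -> R) :=
  [set mu | wmean beta mu 1 != wmean beta mu 0].

Definition Sbeta (beta : 'I_J -> R) (mu : 'I_2 -> 'I_J -> R) : {set 'I_2} :=
  [set a : 'I_2 | (a != 0) && (wmean beta mu 0 < wmean beta mu a)].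

Definition Alt (beta : 'I_J -> R) (mu : 'I_2 -> 'I_J -> R) : set ('I_2 -> 'I_J -> R) :=
  [set lam | Lset beta lam /\ Sbeta beta lam != Sbeta beta mu].

Definition inner (beta : 'I_J -> R) (sigma : 'I_2 -> 'I_J -> R)
  (mu w : 'I_2 -> 'I_J -> R) : R :=
  inf [set \sum_(a < 2) \sum_(i < J) w a i * dKL sigma a i (mu a i) (lam a i)
      | lam in Alt beta mu].

Definition Tinv (C : set ('I_2 -> 'I_J -> R)) (beta : 'I_J -> R)
  (sigma : 'I_2 -> 'I_J -> R) (mu : 'I_2 -> 'I_J -> R) : R :=
  sup [set inner beta sigma mu w | w in C].

Definition Tstar C beta sigma mu : R := (Tinv C beta sigma mu)^-1.

Definition C_active : set ('I_2 -> 'I_J -> R) :=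
  [set w | (forall a i, 0 <= w a i) /\ \sum_(a < 2) \sum_(i < J) w a i = 1].

Definition C_prop (alpha : 'I_J -> R) : set ('I_2 -> 'I_J -> R) :=
  [set w | C_active w /\ forall i, w 0 i + w 1 i = alpha i].

Definition C_agnostic (alpha : 'I_J -> R) : set ('I_2 -> 'I_J -> R) :=
  [set w | exists u : 'I_2 -> R,
     ((forall a, 0 <= u a) /\ \sum_(a < 2) u a = 1) /\
     forall a i, w a i = alpha i * u a].

End Defs.

(* Main.v *)
Require Import Defs.
From HB Require Import structures.
From mathcomp Require Import all_boot all_order all_algebra.
From mathcomp Require Import all_classical all_reals.
From mathcomp Require Import ring lra.
Import Order.TTheory GRing.Theory Num.Theory.
Local Open Scope ring_scope.
Local Open Scope classical_set_scope.

Section Gen.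
Variables (R : realType) (J : nat).
Variables (beta : 'I_J -> R) (sigma mu : 'I_2 -> 'I_J -> R).
Hypothesis hsigma : forall a i, 0 < sigma a i.
Hypothesis hmu : Lset beta mu.

Definition Dl := wmean beta mu 0 - wmean beta mu 1.

Definition cost (w lam : 'I_2 -> 'I_J -> R) :=
  \sum_(a < 2) \sum_(i < J) w a i * dKL sigma a i (mu a i) (lam a i).

Definition Vw (w : 'I_2 -> 'I_J -> R) :=
  \sum_(a < 2) \sum_(i < J) beta i ^+ 2 * sigma a i ^+ 2 / w a i.

Definition sgn (a : 'I_2) : R := if a == 0 then -1 else 1.

Lemma sum2 (F : 'I_2 -> R) : \sum_(a < 2) F a = F 0 + F 1.
Proof. by rewrite !big_ord_recl big_ord0 addr0; congr (F _ + F _); apply/val_inj. Qed.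

Lemma sgn_sq a : sgn a ^+ 2 = 1.
Proof. by rewrite /sgn; case: ifP => _; rewrite ?sqrrN expr1n. Qed.

Lemma dKL_ge0 a i x y : 0 <= dKL sigma a i x y.
Proof. by rewrite /dKL divr_ge0 ?sqr_ge0 // mulr_ge0 // sqr_ge0. Qed.

Lemma cost_ge0 w lam : (forall a i, 0 <= w a i) -> 0 <= cost w lam.
Proof.
move=> hw; apply: sumr_ge0 => a _; apply: sumr_ge0 => i _.
by rewrite mulr_ge0 // dKL_ge0.
Qed.

Lemma Sbeta_eq x y :
  (wmean beta x 0 < wmean beta x 1) = (wmean beta y 0 < wmean beta y 1) ->
  Sbeta beta x = Sbeta beta y.
Proof.
move=> E; apply/setP => j; rewrite !inE.
case: (eqVneq j 0) => [->|hj] //=.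
have -> : j = 1 by apply/val_inj; move: hj; case: j => [[|[|k]] Hk] //=.
by rewrite E.
Qed.

Lemma Dl_neq0 : Dl != 0.
Proof. by move: hmu; rewrite /Lset /Dl /= subr_eq0 eq_sym. Qed.

Lemma per_term (w b x k s : R) : 0 < s -> 0 <= w -> (w = 0 -> b = 0) ->
  k * b * x - k ^+ 2 * (b ^+ 2 * s ^+ 2 / w) / 2 <= w * (x ^+ 2 / (2 * s ^+ 2)).
Proof.
move=> hs hw hb; have [w0|wpos] := eqVneq w 0.
  by rewrite w0 (hb w0) invr0 !mulr0 !mul0r subrr.
have wp : 0 < w by rewrite lt_def wpos hw.
rewrite -subr_ge0.
have -> : w * (x ^+ 2 / (2 * s ^+ 2)) - (k * b * x - k ^+ 2 * (b ^+ 2 * s ^+ 2 / w) / 2)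
   = (w * x - k * b * s ^+ 2) ^+ 2 / (2 * s ^+ 2 * w).
  by field; rewrite wpos /= ?gt_eqF // ?mulf_neq0 ?expf_neq0 ?gt_eqF.
by rewrite divr_ge0 ?sqr_ge0 // !mulr_ge0 ?sqr_ge0 ?ltW.
Qed.


Lemma sum_lin k c (F G : 'I_2 -> 'I_J -> R) :
  \sum_(a < 2) \sum_(i < J) (k * F a i - c * G a i) =
  k * (\sum_(a < 2) \sum_(i < J) F a i) - c * (\sum_(a < 2) \sum_(i < J) G a i).
Proof.
rewrite !mulr_sumr -sumrB; apply: eq_bigr => a _.
by rewrite !mulr_sumr -sumrB.
Qed.

Lemma Vw_ge0 w : (forall a i, 0 <= w a i) -> 0 <= Vw w.
Proof.
move=> hw; apply: sumr_ge0 => a _; apply: sumr_ge0 => i _.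
by rewrite divr_ge0 // mulr_ge0 // sqr_ge0.
Qed.

Lemma cost_lb w lam : (forall a i, 0 <= w a i) ->
  (forall a i, w a i = 0 -> beta i = 0) -> Alt beta mu lam ->
  Dl ^+ 2 / (2 * Vw w) <= cost w lam.
Proof.
move=> hw hb [hL hS].
set m := wmean beta mu 1 - wmean beta mu 0.
set L := wmean beta lam 1 - wmean beta lam 0.
have hmL : m * L <= 0.
  have hne : (wmean beta mu 0 < wmean beta mu 1) != (wmean beta lam 0 < wmean beta lam 1).
    apply: contra hS => /eqP E; apply/eqP; exact: Sbeta_eq (esym E).
  move: hL; rewrite /Lset /= => hL.
  rewrite /m /L.
  case: ltrP hne => h1; case: ltrP => h2 //= _.
    by rewrite mulr_ge0_le0 // ?subr_ge0 ?subr_le0 // ltW // subr_gt0.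
  by rewrite mulr_le0_ge0 // ?subr_le0 // ltW // subr_gt0.
set g := \sum_(a < 2) \sum_(i < J) sgn a * beta i * (mu a i - lam a i).
have hg : g = m - L.
  rewrite /g /m /L /wmean sum2 /sgn /=.
  rewrite -!sumrB -!big_split /=; apply: eq_bigr => i _; ring.
have := Vw_ge0 w hw; rewrite le_eqVlt => /orP [/eqP V0|Vp].
  by rewrite -V0 mulr0 invr0 mulr0 cost_ge0.
set k := m / Vw w.
have step : k * g - k ^+ 2 / 2 * Vw w <= cost w lam.
  rewrite /g /Vw -sum_lin /cost; apply: ler_sum => a _; apply: ler_sum => i _.
  have hb' : w a i = 0 -> sgn a * beta i = 0 by move/hb ->; rewrite mulr0.
  have := @per_term (w a i) (sgn a * beta i) (mu a i - lam a i) k (sigma a i) (hsigma a i) (hw a i) hb'.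
  rewrite [(sgn a * beta i) ^+ 2]exprMn sgn_sq mul1r /dKL => H; apply: le_trans H.
  by rewrite le_eqVlt; apply/orP; left; apply/eqP; ring.
apply: le_trans step.
have hD : Dl = - m by rewrite /Dl /m opprB.
rewrite -subr_ge0.
have -> : k * g - k ^+ 2 / 2 * Vw w - Dl ^+ 2 / (2 * Vw w) = (- (m * L)) / Vw w.
  rewrite /k hD hg; field; by rewrite gt_eqF.
by rewrite divr_ge0 ?oppr_ge0 // ltW.
Qed.


Lemma alt_mem (d : 'I_2 -> 'I_J -> R) t :
  \sum_(i < J) beta i * (d 1 i - d 0 i) = Dl -> 1 < t ->
  Alt beta mu (fun a i => mu a i + t * d a i).
Proof.
move=> hd ht.
set lam := (fun a i => mu a i + t * d a i).
have hw a : wmean beta lam a = wmean beta mu a + t * \sum_(i < J) beta i * d a i.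
  by rewrite /wmean mulr_sumr -big_split; apply: eq_bigr => i _ /=; rewrite /lam; ring.
have hd' : \sum_(i < J) beta i * d 1 i - \sum_(i < J) beta i * d 0 i = Dl.
  by rewrite -sumrB -hd; apply: eq_bigr => i _; ring.
have hdiff : wmean beta lam 1 - wmean beta lam 0 = (t - 1) * Dl.
  have -> : wmean beta lam 1 - wmean beta lam 0 = (wmean beta mu 1 - wmean beta mu 0)
     + t * (\sum_(i < J) beta i * d 1 i - \sum_(i < J) beta i * d 0 i) by rewrite !hw; ring.
  by rewrite hd' /Dl; ring.
have hm : wmean beta mu 1 - wmean beta mu 0 = - Dl by rewrite /Dl opprB.
split.
  by rewrite /Lset /= -subr_eq0 hdiff mulf_neq0 ?Dl_neq0 // subr_eq0 gt_eqF.
apply/negP => /eqP E.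
have : (1 \in Sbeta beta lam) = (1 \in Sbeta beta mu) by rewrite E.
rewrite !inE /= -[wmean beta lam 0 < _]subr_gt0 -[wmean beta mu 0 < _]subr_gt0.
rewrite hdiff hm oppr_gt0 pmulr_rgt0; last by rewrite subr_gt0.
by move: Dl_neq0; case: ltrgtP.
Qed.

Lemma cost_scale w (d : 'I_2 -> 'I_J -> R) t :
  cost w (fun a i => mu a i + t * d a i) = t ^+ 2 * cost w (fun a i => mu a i + d a i).
Proof.
rewrite /cost mulr_sumr; apply: eq_bigr => a _; rewrite mulr_sumr.
by apply: eq_bigr => i _; rewrite /dKL; ring.
Qed.

Lemma inner_ub w (d : 'I_2 -> 'I_J -> R) : (forall a i, 0 <= w a i) ->
  \sum_(i < J) beta i * (d 1 i - d 0 i) = Dl ->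
  inner beta sigma mu w <= cost w (fun a i => mu a i + d a i).
Proof.
move=> hw hd.
set c := cost w (fun a i => mu a i + d a i).
have c0 : 0 <= c by apply: cost_ge0.
have H : forall t, 1 < t -> inner beta sigma mu w <= t ^+ 2 * c.
  move=> t ht; rewrite /c -cost_scale; apply: ge_inf.
    by exists 0 => y [lam _ <-]; apply: cost_ge0.
  by exists (fun a i => mu a i + t * d a i) => //; apply: alt_mem.
apply/ler_addgt0Pr => e he.
set q := e / (c + 1).
have q0 : 0 < q by rewrite /q divr_gt0 // ltr_wpDl.
have hq : q * (c + 1) = e by rewrite /q; field; rewrite gt_eqF // ltr_wpDl.
have := H (Num.sqrt (1 + q)).
rewrite sqr_sqrtr; last by lra.
rewrite -[X in X < _]sqrtr1 ltr_sqrt; last by lra.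
move=> /(_ ltac:(lra)) h; apply: le_trans h _.
nra.
Qed.


Lemma main_gen (C : set ('I_2 -> 'I_J -> R)) wst V (d : 'I_2 -> 'I_J -> R) :
  C wst -> 0 < V -> (forall a i, 0 <= wst a i) ->
  (forall a i, wst a i = 0 -> beta i = 0) -> Vw wst = V ->
  \sum_(i < J) beta i * (d 1 i - d 0 i) = Dl ->
  (forall w, C w -> inner beta sigma mu w <= Dl ^+ 2 / (2 * V)) ->
  [/\ inner beta sigma mu wst = Dl ^+ 2 / (2 * V),
      Tinv C beta sigma mu = Dl ^+ 2 / (2 * V) &
      Tstar C beta sigma mu = 2 * V / Dl ^+ 2].
Proof.
move=> hC hV hw0 hb hVw hd hub.
have hin : inner beta sigma mu wst = Dl ^+ 2 / (2 * V).
  apply/eqP; rewrite eq_le; apply/andP; split; first exact: hub.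
  apply: lb_le_inf.
    exists (cost wst (fun a i => mu a i + 2 * d a i)).
    by exists (fun a i => mu a i + 2 * d a i) => //; apply: alt_mem => //; lra.
  by move=> y [lam hl <-]; rewrite -hVw; apply: cost_lb.
have hT : Tinv C beta sigma mu = Dl ^+ 2 / (2 * V).
  rewrite /Tinv; apply/eqP; rewrite eq_le; apply/andP; split.
    apply: ge_sup; first by exists (inner beta sigma mu wst); exists wst.
    by move=> y [w hw <-]; apply: hub.
  rewrite -hin; apply: sup_upper_bound; last by exists wst.
  split; first by exists (inner beta sigma mu wst); exists wst.
  by exists (Dl ^+ 2 / (2 * V)) => y [w hw <-]; apply: hub.
by split => //; rewrite /Tstar hT invf_div.
Qed.

Lemma exists_beta : exists j, beta j != 0.
Proof.
apply/not_existsP => H.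
have hb : forall j, beta j = 0 by move=> j; apply/eqP/negP => /negP; apply: (H j).
move: hmu; rewrite /Lset /= /wmean.
by rewrite !big1 ?eqxx // => i _; rewrite hb mul0r.
Qed.

End Gen.

Arguments Dl {R J}. Arguments sgn {R}. Arguments Vw {R J}. Arguments cost {R J}.
Arguments exists_beta {R J beta mu}. Arguments main_gen {R J beta sigma mu}.
Arguments inner_ub {R J beta sigma mu}.
Arguments sgn_sq {R}.

Section Cases.
Variables (R : realType) (J : nat).
Variables (alpha beta : 'I_J -> R) (sigma mu : 'I_2 -> 'I_J -> R).
Hypothesis halpha_pos : forall i, 0 < alpha i.
Hypothesis halpha_sum : \sum_(i < J) alpha i = 1.
Hypothesis hsigma : forall a i, 0 < sigma a i.
Hypothesis hmu : Lset beta mu.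

Lemma nsq (x : R) : `|x| ^+ 2 = x ^+ 2.
Proof. exact: real_normK (num_real x). Qed.

Lemma sum_mull c (F : 'I_2 -> 'I_J -> R) :
  \sum_(a < 2) \sum_(i < J) (c * F a i) = c * \sum_(a < 2) \sum_(i < J) F a i.
Proof. rewrite mulr_sumr; apply: eq_bigr => a _; by rewrite mulr_sumr. Qed.

Lemma pos_sum (F : 'I_J -> R) j : (forall i, 0 <= F i) -> 0 < F j -> 0 < \sum_(i < J) F i.
Proof.
move=> h hj; rewrite (bigD1 j) //=; apply: ltr_pwDl => //.
by apply: sumr_ge0 => i _.
Qed.

Lemma sgn0 : sgn (0 : 'I_2) = -1 :> R. Proof. by []. Qed.
Lemma sgn1 : sgn (1 : 'I_2) = 1 :> R. Proof. by []. Qed.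

Definition Zc := \sum_(j < J) `|beta j| * (sigma 0 j + sigma 1 j).

Lemma Zc_gt0 : 0 < Zc.
Proof.
have [j hj] := exists_beta hmu.
apply: (@pos_sum _ j) => [i|]; first by rewrite mulr_ge0 // addr_ge0 // ltW.
by rewrite mulr_gt0 ?normr_gt0 // addr_gt0.
Qed.

Definition wac (a : 'I_2) (i : 'I_J) := `|beta i| * sigma a i / Zc.

Definition dac (a : 'I_2) (i : 'I_J) :=
  sgn a * Dl beta mu * beta i * sigma a i / (Zc * `|beta i|).

Lemma case_active :
  [/\ inner beta sigma mu wac = Dl beta mu ^+ 2 / (2 * Zc ^+ 2),
      Tinv (@C_active R J) beta sigma mu = Dl beta mu ^+ 2 / (2 * Zc ^+ 2),
      Tstar (@C_active R J) beta sigma mu = 2 * Zc ^+ 2 / Dl beta mu ^+ 2 &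
      C_active wac].
Proof.
have Zp := Zc_gt0.
have Zn : Zc != 0 by rewrite gt_eqF.
have w0 : forall a i, 0 <= wac a i.
  by move=> a i; rewrite /wac divr_ge0 ?mulr_ge0 // ltW.
have hsumZ : \sum_(a < 2) \sum_(i < J) `|beta i| * sigma a i = Zc.
  by rewrite sum2 -big_split; apply: eq_bigr => i _ /=; ring.
have hC : C_active wac.
  split => //; rewrite /wac.
  transitivity (Zc^-1 * \sum_(a < 2) \sum_(i < J) `|beta i| * sigma a i).
    by rewrite -sum_mull; apply: eq_bigr => a _; apply: eq_bigr => i _; ring.
  by rewrite hsumZ mulVf.
have hb : forall a i, wac a i = 0 -> beta i = 0.
  move=> a i /eqP; rewrite /wac mulf_eq0 invr_eq0 (negbTE Zn) orbF mulf_eq0.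
  by rewrite (gt_eqF (hsigma a i)) orbF normr_eq0 => /eqP.
have hV : Vw beta sigma wac = Zc ^+ 2.
  rewrite /Vw.
  transitivity (\sum_(a < 2) \sum_(i < J) (Zc * (`|beta i| * sigma a i))).
    apply: eq_bigr => a _; apply: eq_bigr => i _; rewrite /wac.
    have [->|bn] := eqVneq (beta i) 0; first by rewrite normr0 !(mul0r, mulr0, expr0n).
    rewrite -nsq; field.
    by rewrite Zn normr_eq0 bn (gt_eqF (hsigma a i)).
  by rewrite sum_mull hsumZ expr2.
have hinv : forall i, beta i != 0 -> `|beta i|^-1 = `|beta i| / beta i ^+ 2.
  move=> i bn; rewrite -nsq; field; by rewrite normr_eq0.
have hd : \sum_(i < J) beta i * (dac 1 i - dac 0 i) = Dl beta mu.
  transitivity (\sum_(i < J) (Dl beta mu / Zc) * (`|beta i| * (sigma 0 i + sigma 1 i))).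
    apply: eq_bigr => i _; rewrite /dac sgn0 sgn1.
    have [->|bn] := eqVneq (beta i) 0; first by rewrite normr0 !(mul0r, mulr0).
    rewrite !invfM hinv //; field; by rewrite Zn bn.
  by rewrite -mulr_sumr -/Zc; field.
have hub : forall w, C_active w -> inner beta sigma mu w <= Dl beta mu ^+ 2 / (2 * Zc ^+ 2).
  move=> w [hw hw1]; apply: le_trans (inner_ub hmu _ _ hw hd) _.
  rewrite /cost.
  apply: le_trans (_ : \sum_(a < 2) \sum_(i < J) (Dl beta mu ^+ 2 / (2 * Zc ^+ 2) * w a i) <= _); last first.
    by rewrite sum_mull hw1 mulr1.
  apply: ler_sum => a _; apply: ler_sum => i _; rewrite /dKL.
  have -> : mu a i - (mu a i + dac a i) = - dac a i by ring.
  rewrite sqrrN.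
  have [bz|bn] := eqVneq (beta i) 0.
    have -> : dac a i = 0 by rewrite /dac bz !(mulr0, mul0r).
    rewrite expr0n /= mul0r mulr0.
    by rewrite mulr_ge0 // divr_ge0 ?sqr_ge0 // mulr_ge0 // sqr_ge0.
  rewrite le_eqVlt; apply/orP; left; apply/eqP.
  have hn : `|beta i| ^+ 2 = beta i ^+ 2 := nsq (beta i).
  have hs2 : sgn a ^+ 2 = 1 := sgn_sq a.
  have bn' : `|beta i| != 0 by rewrite normr_eq0.
  have sn : sigma a i != 0 by rewrite gt_eqF.
  rewrite /dac !exprMn ?exprVn !exprMn hs2 hn; field.
  by rewrite Zn bn sn.
have Z2 : 0 < Zc ^+ 2 by rewrite exprn_gt0.
have [h1 h2 h3] := main_gen hsigma hmu _ _ _ _ hC Z2 w0 hb hV hd hub.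
by split.
Qed.


Definition Pc := \sum_(i < J) beta i ^+ 2 / alpha i * (sigma 0 i + sigma 1 i) ^+ 2.
Definition wpr (a : 'I_2) (i : 'I_J) := alpha i * sigma a i / (sigma 0 i + sigma 1 i).
Definition dpr (a : 'I_2) (i : 'I_J) :=
  sgn a * Dl beta mu * beta i * sigma a i * (sigma 0 i + sigma 1 i) / (alpha i * Pc).

Lemma case_prop :
  [/\ inner beta sigma mu wpr = Dl beta mu ^+ 2 / (2 * Pc),
      Tinv (C_prop alpha) beta sigma mu = Dl beta mu ^+ 2 / (2 * Pc),
      Tstar (C_prop alpha) beta sigma mu = 2 * Pc / Dl beta mu ^+ 2 &
      C_prop alpha wpr].
Proof.
have sp : forall i, 0 < sigma 0 i + sigma 1 i by move=> i; rewrite addr_gt0.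
have sn : forall a i, sigma a i != 0 by move=> a i; rewrite gt_eqF.
have spn : forall i, sigma 0 i + sigma 1 i != 0 by move=> i; rewrite gt_eqF.
have an : forall i, alpha i != 0 by move=> i; rewrite gt_eqF.
have Pp : 0 < Pc.
  have [j hj] := exists_beta hmu.
  apply: (@pos_sum _ j) => [i|].
    by rewrite mulr_ge0 ?sqr_ge0 // divr_ge0 ?sqr_ge0 // ltW.
  rewrite mulr_gt0 ?exprn_gt0 // divr_gt0 //.
  by rewrite lt_def sqrf_eq0 hj sqr_ge0.
have Pn : Pc != 0 by rewrite gt_eqF.
have wpos : forall a i, 0 < wpr a i.
  by move=> a i; rewrite /wpr divr_gt0 ?mulr_gt0.
have w0 : forall a i, 0 <= wpr a i by move=> a i; apply: ltW.
have hC : C_prop alpha wpr.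
  split; last by move=> i; rewrite /wpr; field.
  split => //; rewrite sum2 -big_split /= -halpha_sum.
  by apply: eq_bigr => i _; rewrite /wpr; field.
have hb : forall a i, wpr a i = 0 -> beta i = 0.
  by move=> a i h; move: (wpos a i); rewrite h ltxx.
have hV : Vw beta sigma wpr = Pc.
  rewrite /Vw sum2 -big_split; apply: eq_bigr => i _ /=; rewrite /wpr; field.
  by rewrite an sn sn spn.
have hd : \sum_(i < J) beta i * (dpr 1 i - dpr 0 i) = Dl beta mu.
  transitivity (\sum_(i < J) (Dl beta mu / Pc) *
     (beta i ^+ 2 / alpha i * (sigma 0 i + sigma 1 i) ^+ 2)).
    by apply: eq_bigr => i _; rewrite /dpr /sgn /=; field; rewrite an Pn.
  by rewrite -mulr_sumr -/Pc; field.
have hub : forall w, C_prop alpha w -> inner beta sigma mu w <= Dl beta mu ^+ 2 / (2 * Pc).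
  move=> w [[hw hw1] hwa]; apply: le_trans (inner_ub hmu _ _ hw hd) _.
  rewrite le_eqVlt; apply/orP; left; apply/eqP.
  rewrite /cost sum2 -big_split /=.
  transitivity (\sum_(i < J) (Dl beta mu ^+ 2 / (2 * Pc ^+ 2)) *
     (beta i ^+ 2 / alpha i * (sigma 0 i + sigma 1 i) ^+ 2)).
    apply: eq_bigr => i _; rewrite /dKL.
    have -> : w 0 i = alpha i - w 1 i by rewrite -(hwa i); ring.
    rewrite !opprD !addrA !subrr !add0r !sqrrN /dpr /sgn /=; field.
    by rewrite Pn an sn sn.
  by rewrite -mulr_sumr -/Pc; field.
have [h1 h2 h3] := main_gen hsigma hmu _ _ _ _ hC Pp w0 hb hV hd hub.
by split.
Qed.

Definition Qa (a : 'I_2) := \sum_(j < J) beta j ^+ 2 * sigma a j ^+ 2 / alpha j.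
Definition sa (a : 'I_2) := Num.sqrt (Qa a).
Definition Sg := sa 0 + sa 1.
Definition wag (a : 'I_2) (i : 'I_J) := alpha i * sa a / Sg.
Definition dag (a : 'I_2) (i : 'I_J) :=
  sgn a * Dl beta mu * beta i * sigma a i ^+ 2 / (alpha i * sa a * Sg).

Lemma case_agn :
  [/\ inner beta sigma mu wag = Dl beta mu ^+ 2 / (2 * Sg ^+ 2),
      Tinv (C_agnostic alpha) beta sigma mu = Dl beta mu ^+ 2 / (2 * Sg ^+ 2),
      Tstar (C_agnostic alpha) beta sigma mu = 2 * Sg ^+ 2 / Dl beta mu ^+ 2 &
      C_agnostic alpha wag].
Proof.
have sn : forall a i, sigma a i != 0 by move=> a i; rewrite gt_eqF.
have an : forall i, alpha i != 0 by move=> i; rewrite gt_eqF.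
have Qp : forall a, 0 < Qa a.
  move=> a; have [j hj] := exists_beta hmu.
  apply: (@pos_sum _ j) => [i|].
    by apply: divr_ge0; [apply: mulr_ge0; apply: sqr_ge0 | apply: ltW].
  apply: divr_gt0 => //; apply: mulr_gt0; last exact: exprn_gt0.
  by rewrite lt_def sqrf_eq0 hj sqr_ge0.
have sp : forall a, 0 < sa a by move=> a; rewrite /sa sqrtr_gt0.
have sN : forall a, sa a != 0 by move=> a; rewrite gt_eqF.
have hs2 : forall a, sa a ^+ 2 = Qa a by move=> a; rewrite /sa sqr_sqrtr // ltW.
have Sp : 0 < Sg by rewrite /Sg addr_gt0.
have SN : Sg != 0 by rewrite gt_eqF.
have wpos : forall a i, 0 < wag a i.
  by move=> a i; rewrite /wag divr_gt0 ?mulr_gt0.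
have w0 : forall a i, 0 <= wag a i by move=> a i; apply: ltW.
have hC : C_agnostic alpha wag.
  exists (fun a => sa a / Sg); split; last by move=> a i; rewrite /wag mulrA.
  split; first by move=> a; rewrite divr_ge0 // ltW.
  by rewrite sum2 /Sg; field; rewrite -/Sg.
have hb : forall a i, wag a i = 0 -> beta i = 0.
  by move=> a i h; move: (wpos a i); rewrite h ltxx.
have hV : Vw beta sigma wag = Sg ^+ 2.
  rewrite /Vw.
  transitivity (\sum_(a < 2) (Sg / sa a) * Qa a).
    apply: eq_bigr => a _; rewrite /Qa mulr_sumr; apply: eq_bigr => i _.
    by rewrite /wag; field; rewrite an sN SN.
  rewrite sum2 -(hs2 0) -(hs2 1) /Sg; field.
  by rewrite !sN.
have hd : \sum_(i < J) beta i * (dag 1 i - dag 0 i) = Dl beta mu.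
  transitivity (\sum_(i < J) (Dl beta mu / (Sg * sa 1) * (beta i ^+ 2 * sigma 1 i ^+ 2 / alpha i)
      + Dl beta mu / (Sg * sa 0) * (beta i ^+ 2 * sigma 0 i ^+ 2 / alpha i))).
    by apply: eq_bigr => i _; rewrite /dag /sgn /=; field; rewrite an !sN SN.
  rewrite big_split /= -!mulr_sumr -/(Qa 1) -/(Qa 0) -(hs2 0) -(hs2 1).
  move: SN; rewrite /Sg => SN'; field.
  by rewrite !sN SN'.
have hub : forall w, C_agnostic alpha w -> inner beta sigma mu w <= Dl beta mu ^+ 2 / (2 * Sg ^+ 2).
  move=> w [u [[hu0 hu1] hwu]].
  have hw : forall a i, 0 <= w a i by move=> a i; rewrite hwu mulr_ge0 // ltW.
  apply: le_trans (inner_ub hmu _ _ hw hd) _.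
  rewrite le_eqVlt; apply/orP; left; apply/eqP.
  rewrite /cost.
  transitivity (\sum_(a < 2) u a * (Dl beta mu ^+ 2 / (2 * Sg ^+ 2))); last first.
    by rewrite -mulr_suml hu1 mul1r.
  apply: eq_bigr => a _.
  transitivity (\sum_(i < J) (u a * Dl beta mu ^+ 2 / (2 * sa a ^+ 2 * Sg ^+ 2)) *
      (beta i ^+ 2 * sigma a i ^+ 2 / alpha i)).
    apply: eq_bigr => i _; rewrite hwu /dKL opprD addrA subrr add0r sqrrN /dag.
    rewrite !exprMn ?exprVn !exprMn sgn_sq; field.
    by rewrite an sn sN SN.
  rewrite -mulr_sumr -/(Qa a) -(hs2 a); field.
  by rewrite sN SN.
have S2 : 0 < Sg ^+ 2 by rewrite exprn_gt0.
have [h1 h2 h3] := main_gen hsigma hmu _ _ _ _ hC S2 w0 hb hV hd hub.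
by split.
Qed.

End Cases.

Theorem proposition2 (R : realType) (J : nat) (hJ : (0 < J)%N)
  (alpha beta : 'I_J -> R) (sigma mu : 'I_2 -> 'I_J -> R)
  (halpha_pos : forall i, 0 < alpha i) (halpha_sum : \sum_(i < J) alpha i = 1)
  (hsigma : forall a i, 0 < sigma a i)
  (hmu : Lset beta mu) :
  let Delta1 := wmean beta mu 0 - wmean beta mu 1 in
  let s := fun a : 'I_2 =>
    Num.sqrt (\sum_(j < J) beta j ^+ 2 * sigma a j ^+ 2 / alpha j) in
  let wag := fun (a : 'I_2) (i : 'I_J) => alpha i * s a / (s 0 + s 1) in
  let wpr := fun (a : 'I_2) (i : 'I_J) => alpha i * sigma a i / (sigma 0 i + sigma 1 i) in
  let Z := \sum_(j < J) `|beta j| * (sigma 0 j + sigma 1 j) in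
  let wac := fun (a : 'I_2) (i : 'I_J) => `|beta i| * sigma a i / Z in
  [/\
   (* (1) agnostic *)
   Tstar (C_agnostic alpha) beta sigma mu = 2 * (s 0 + s 1) ^+ 2 / Delta1 ^+ 2
   /\ C_agnostic alpha wag
   /\ inner beta sigma mu wag = Tinv (C_agnostic alpha) beta sigma mu,
   (* (2) proportional *)
   Tstar (C_prop alpha) beta sigma mu =
     2 * (\sum_(i < J) beta i ^+ 2 / alpha i * (sigma 0 i + sigma 1 i) ^+ 2)
       / Delta1 ^+ 2
   /\ C_prop alpha wpr
   /\ inner beta sigma mu wpr = Tinv (C_prop alpha) beta sigma mu
  & (* (3) active *)
   Tstar (@C_active R J) beta sigma mu = 2 * Z ^+ 2 / Delta1 ^+ 2
   /\ C_active wac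
   /\ inner beta sigma mu wac = Tinv (@C_active R J) beta sigma mu].
Proof.
move=> Delta1 s wag0 wpr0 Z wac0.
have [a1 a2 a3 a4] := @case_agn R J alpha beta sigma mu halpha_pos hsigma hmu.
have [p1 p2 p3 p4] := @case_prop R J alpha beta sigma mu halpha_pos halpha_sum hsigma hmu.
have [c1 c2 c3 c4] := @case_active R J beta sigma mu hsigma hmu.
split.
- split; first exact: a3.
  split; first exact: a4.
  exact: (etrans a1 (esym a2)).
- split; first exact: p3.
  split; first exact: p4.
  exact: (etrans p1 (esym p2)).
- split; first exact: c3.
  split; first exact: c4.
  exact: (etrans c1 (esym c2)).
Qed.
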